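(* Let $d,e\ge2$ be integers. There exists a quasi-symmetric homeomorphism $\phi:\mathbb S^1\cong\mathbb R/\mathbb Z\to\mathbb S^1$ that maps the set of $d$-adic rationals $\{p/d^n: p,n\in\mathbb Z_{\ge0}\}$ (mod $1$) onto the set of $e$-adic rationals $\{q/e^m: q,m\in\mathbb Z_{\ge0}\}$ (mod $1$). *)

(* Defs.v *)
(* the circle S^1 = R/Z is modelled by R modulo the relation
   x ~ y  <->  x - y is an integer.  A map of the circle is a function
   f : R -> R compatible with this relation. *)
From Stdlib Require Import Reals ZArith.
Open Scope R_scope.

Definition eqmod1 (x y : R) : Prop := exists k : Z, x - y = IZR k.

Definition fracp (t : R) : R := t - IZR (Int_part t).

(* the standard (arc-length) metric on R/Z: distance to the nearest integer *)
Definition cdist (x y : R) : R := Rmin (fracp (x - y)) (1 - fracp (x - y)).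

Definition circle_map (f : R -> R) : Prop :=
  forall x y, eqmod1 x y -> eqmod1 (f x) (f y).

Definition circle_continuous (f : R -> R) : Prop :=
  forall x eps, 0 < eps -> exists delta, 0 < delta /\
    forall y, cdist x y < delta -> cdist (f x) (f y) < eps.

Definition circle_homeo (f : R -> R) : Prop :=
  circle_map f /\ circle_continuous f /\
  exists g : R -> R, circle_map g /\ circle_continuous g /\
    (forall x, eqmod1 (g (f x)) x) /\ (forall y, eqmod1 (f (g y)) y).

Definition distortion (eta : R -> R) : Prop :=
  eta 0 = 0 /\
  (forall s t, 0 <= s -> s < t -> eta s < eta t) /\
  (forall t, 0 <= t -> continuity_pt eta t) /\
  (forall M, exists t, 0 <= t /\ M < eta t).

Definition circle_quasisymmetric (f : R -> R) : Prop :=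
  exists eta : R -> R, distortion eta /\
    forall x y z, 0 < cdist x z ->
      cdist (f x) (f y) <= eta (cdist x y / cdist x z) * cdist (f x) (f z).

Definition adic_mod1 (d : nat) (x : R) : Prop :=
  exists p n : nat, eqmod1 x (INR p / INR d ^ n).

(* Main.v *)
Require Import Defs.
From Stdlib Require Import Reals ZArith Lra Lia List Cantor ClassicalEpsilon Classical.
From Coquelicot Require Import Coquelicot.
Import ListNotations.
Open Scope R_scope.


Lemma eqmod1_refl x : eqmod1 x x.
Proof. exists 0%Z. simpl; ring. Qed.
Lemma eqmod1_sym x y : eqmod1 x y -> eqmod1 y x.
Proof. intros [k Hk]. exists (- k)%Z. rewrite opp_IZR. lra. Qed.
Lemma eqmod1_trans x y z : eqmod1 x y -> eqmod1 y z -> eqmod1 x z.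
Proof. intros [k Hk] [l Hl]. exists (k + l)%Z. rewrite plus_IZR. lra. Qed.
Lemma adic_eqmod b x y : eqmod1 x y -> adic_mod1 b y -> adic_mod1 b x.
Proof. intros H [p [n Hp]]. exists p, n. eapply eqmod1_trans; eauto. Qed.

Definition phi (t : R) := Rmin (fracp t) (1 - fracp t).
Lemma cdist_phi x y : cdist x y = phi (x - y).
Proof. reflexivity. Qed.

Lemma fracp_bounds t : 0 <= fracp t < 1.
Proof. unfold fracp. destruct (base_Int_part t). lra. Qed.

Lemma phi_le t k : phi t <= Rabs (t - IZR k).
Proof.
  unfold phi, fracp. destruct (base_Int_part t) as [H1 H2].
  set (m := Int_part t) in *.
  destruct (Z_le_gt_dec k m) as [Hk|Hk].
  - apply IZR_le in Hk. rewrite Rabs_right by lra.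
    eapply Rle_trans; [apply Rmin_l|]. lra.
  - assert (IZR (m + 1) <= IZR k) by (apply IZR_le; lia).
    rewrite plus_IZR in H. rewrite Rabs_left1 by lra.
    eapply Rle_trans; [apply Rmin_r|]. lra.
Qed.

Lemma phi_attained t : exists k, phi t = Rabs (t - IZR k).
Proof.
  unfold phi, fracp. destruct (base_Int_part t) as [H1 H2].
  set (m := Int_part t) in *.
  destruct (Rle_dec (t - IZR m) (1 - (t - IZR m))).
  - exists m. rewrite Rmin_left by lra. rewrite Rabs_right by lra. lra.
  - exists (m + 1)%Z. rewrite Rmin_right by lra. rewrite plus_IZR.
    rewrite Rabs_left1 by lra. lra.
Qed.

Lemma phi_nonneg t : 0 <= phi t.
Proof. destruct (phi_attained t) as [k ->]. apply Rabs_pos. Qed.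
Lemma phi_le_half t : phi t <= 1/2.
Proof. unfold phi. pose proof (fracp_bounds t).
  destruct (Rle_dec (fracp t) (1 - fracp t)).
  rewrite Rmin_left; lra. rewrite Rmin_right; lra. Qed.

Lemma phi_lip s t : phi s <= phi t + Rabs (s - t).
Proof.
  destruct (phi_attained t) as [k Hk]. rewrite Hk.
  eapply Rle_trans; [apply (phi_le s k)|].
  replace (s - IZR k) with ((t - IZR k) + (s - t)) by ring. apply Rabs_triang.
Qed.

Lemma cdist_nonneg x y : 0 <= cdist x y.
Proof. apply phi_nonneg. Qed.

Lemma cdist_lip1 x y a : Rabs (cdist x a - cdist y a) <= Rabs (x - y).
Proof.
  unfold cdist. fold (phi (x - a)). fold (phi (y - a)).
  pose proof (phi_lip (x - a) (y - a)). pose proof (phi_lip (y - a) (x - a)).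
  replace (x - a - (y - a)) with (x - y) in * by ring.
  replace (y - a - (x - a)) with (-(x - y)) in * by ring.
  rewrite Rabs_Ropp in *. apply Rabs_le. lra.
Qed.

Lemma cdist_zero x y : cdist x y = 0 -> eqmod1 x y.
Proof.
  intro H. unfold cdist in H. fold (phi (x - y)) in H.
  destruct (phi_attained (x - y)) as [k Hk]. exists k.
  rewrite H in Hk. destruct (Rcase_abs (x - y - IZR k)) as [r|r]; [rewrite Rabs_left in Hk|rewrite Rabs_right in Hk]; lra.
Qed.

Lemma cdist_eqmod x y : eqmod1 x y -> cdist x y = 0.
Proof.
  intros [k Hk]. unfold cdist. fold (phi (x - y)).
  apply Rle_antisym; [|apply phi_nonneg].
  pose proof (phi_le (x - y) k). rewrite Hk in H. replace (IZR k - IZR k) with 0 in H by ring.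
  rewrite Rabs_R0 in H. rewrite Hk. exact H.
Qed.

Lemma cdist_shift x y k : cdist (x + IZR k) y = cdist x y.
Proof.
  unfold cdist. fold (phi (x + IZR k - y)). fold (phi (x - y)).
  apply Rle_antisym.
  - destruct (phi_attained (x - y)) as [j Hj]. rewrite Hj.
    replace (x - y - IZR j) with (x + IZR k - y - IZR (j + k)) by (rewrite plus_IZR; ring).
    apply phi_le.
  - destruct (phi_attained (x + IZR k - y)) as [j Hj]. rewrite Hj.
    replace (x + IZR k - y - IZR j) with (x - y - IZR (j - k)) by (rewrite minus_IZR; ring).
    apply phi_le.
Qed.

Lemma cdist_lip_map (F : R -> R) L :
  (forall x k, F (x + IZR k) = F x + IZR k) ->
  (forall x y, Rabs (F x - F y) <= L * Rabs (x - y)) ->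
  forall x y, cdist (F x) (F y) <= L * cdist x y.
Proof.
  intros Hp HL x y. unfold cdist at 2. fold (phi (x - y)).
  destruct (phi_attained (x - y)) as [k Hk]. rewrite Hk.
  unfold cdist. fold (phi (F x - F y)).
  eapply Rle_trans; [apply (phi_le _ k)|].
  replace (F x - F y - IZR k) with (F x - F (y + IZR k)) by (rewrite Hp; ring).
  replace (x - y - IZR k) with (x - (y + IZR k)) by ring. apply HL.
Qed.

Lemma cdist_lower_map (F : R -> R) l : 0 <= l ->
  (forall x k, F (x + IZR k) = F x + IZR k) ->
  (forall x y, l * Rabs (x - y) <= Rabs (F x - F y)) ->
  forall x y, l * cdist x y <= cdist (F x) (F y).
Proof.
  intros Hl Hp HL x y. unfold cdist at 2. fold (phi (F x - F y)).
  destruct (phi_attained (F x - F y)) as [k Hk]. rewrite Hk.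
  unfold cdist. fold (phi (x - y)).
  replace (F x - F y - IZR k) with (F x - F (y + IZR k)) by (rewrite Hp; ring).
  eapply Rle_trans; [|apply HL].
  replace (x - (y + IZR k)) with (x - y - IZR k) by ring.
  apply Rmult_le_compat_l; auto. apply phi_le.
Qed.


Lemma INR_lt_pow2 m : INR m < 2 ^ m.
Proof.
  induction m. simpl; lra.
  rewrite S_INR. simpl. assert (1 <= 2 ^ m) by (apply pow_R1_Rle; lra). lra.
Qed.

Lemma adic_dense (b : nat) (hb : (2 <= b)%nat) (u delta : R) : 0 < delta ->
  exists x, adic_mod1 b x /\ Rabs (x - u) < delta.
Proof.
  intro Hd.
  destruct (archimed (/ delta)) as [Ha _].
  set (N := Z.to_nat (up (/ delta))).
  assert (HN : / delta < INR N).
  { unfold N. rewrite INR_IZR_INZ. rewrite Z2Nat.id. lra.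
    apply le_IZR. assert (0 < / delta) by (apply Rinv_0_lt_compat; lra). lra. }
  set (B := INR (b ^ N)).
  assert (HB : / delta < B).
  { unfold B. rewrite pow_INR. eapply Rlt_le_trans. apply HN.
    eapply Rle_trans. apply Rlt_le, INR_lt_pow2. apply pow_incr.
    split. lra. apply le_INR in hb. simpl in hb. lra. }
  assert (HB0 : 0 < B) by (apply Rle_lt_trans with (/ delta); [apply Rlt_le, Rinv_0_lt_compat|]; lra).
  set (z := Int_part (u * B)).
  destruct (base_Int_part (u * B)) as [H1 H2]. fold z in H1, H2.
  exists (IZR z / B). split.
  - set (M := Z.of_nat (b ^ N)).
    assert (HM : (M <> 0)%Z). { unfold M. intro. assert (IZR (Z.of_nat (b^N)) = 0) by (rewrite H; auto).
      rewrite <- INR_IZR_INZ in H0. fold B in H0. lra. }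
    assert (HMB : IZR M = B). { unfold M, B. rewrite <- INR_IZR_INZ. auto. }
    destruct (Z.mod_pos_bound z M) as [Hm1 Hm2]. { unfold M. lia. }
    exists (Z.to_nat (z mod M)), N. exists (z / M)%Z.
    rewrite INR_IZR_INZ. rewrite Z2Nat.id by lia. rewrite <- pow_INR. fold B.
    pose proof (Z.div_mod z M HM) as Hdm.
    apply (f_equal IZR) in Hdm. rewrite plus_IZR, mult_IZR in Hdm. rewrite HMB in Hdm.
    rewrite Hdm. field. lra.
  - replace (IZR z / B - u) with ((IZR z - u * B) * / B) by (field; lra).
    rewrite Rabs_mult. rewrite (Rabs_right (/ B)) by (apply Rle_ge, Rlt_le, Rinv_0_lt_compat; lra).
    assert (Rabs (IZR z - u * B) < 1) by (apply Rabs_def1; lra).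
    assert (/ B < delta).
    { rewrite <- (Rinv_inv delta). apply Rinv_lt_contravar; auto.
      apply Rmult_lt_0_compat; auto. apply Rinv_0_lt_compat; lra. }
    assert (0 < / B) by (apply Rinv_0_lt_compat; lra).
    pose proof (Rabs_pos (IZR z - u * B)).
    apply Rle_lt_trans with (1 * / B). apply Rmult_le_compat_r; lra. lra.
Qed.


Lemma absle_inv a L : Rabs a <= L -> - L <= a <= L.
Proof. destruct (Rcase_abs a); [rewrite Rabs_left|rewrite Rabs_right]; auto; lra. Qed.

Lemma Rmin_lip a b a' b' L : Rabs (a - a') <= L -> Rabs (b - b') <= L ->
  Rabs (Rmin a b - Rmin a' b') <= L.
Proof.
  intros H1 H2. apply absle_inv in H1. apply absle_inv in H2.
  apply Rabs_le. unfold Rmin.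
  destruct (Rle_dec a b), (Rle_dec a' b'); lra.
Qed.

Lemma lip_continuity (F : R -> R) L : 0 <= L ->
  (forall x y, Rabs (F x - F y) <= L * Rabs (x - y)) -> continuity F.
Proof.
  intros HL HF x. unfold continuity_pt, continue_in, limit1_in, limit_in.
  intros eps Heps. exists (eps / (L + 1)). split.
  - apply Rdiv_lt_0_compat; lra.
  - intros y [_ Hy]. simpl in *. unfold R_dist in *.
    eapply Rle_lt_trans. apply HF.
    apply Rle_lt_trans with ((L + 1) * Rabs (y - x)).
    apply Rmult_le_compat_r. apply Rabs_pos. lra.
    apply Rmult_lt_reg_l with (/ (L + 1)). apply Rinv_0_lt_compat; lra.
    rewrite <- Rmult_assoc, Rinv_l, Rmult_1_l by lra. unfold Rdiv in Hy. lra.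
Qed.

Lemma surj_near_id (F : R -> R) L : 0 <= L ->
  (forall x y, Rabs (F x - F y) <= L * Rabs (x - y)) ->
  (forall x, Rabs (F x - x) <= 1) -> forall y, exists x, F x = y.
Proof.
  intros HL HF Hb y.
  assert (Hc : continuity (fun x => F x - y)).
  { apply continuity_minus. apply (lip_continuity F L); auto. apply continuity_const. intros ? ?; auto. }
  pose proof (Hb (y - 2)) as H1. pose proof (Hb (y + 2)) as H2.
  apply absle_inv in H1. apply absle_inv in H2.
  destruct (IVT (fun x => F x - y) (y - 2) (y + 2) Hc) as [z [_ Hz]]; simpl; try lra.
  exists z. lra.
Qed.

Definition hfun (l : list R) (x : R) : R :=
  fold_right (fun a acc => Rmin (cdist x a) acc) (cdist x 0) l.

Lemma hfun_nonneg l x : 0 <= hfun l x.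
Proof. induction l; simpl. apply cdist_nonneg. apply Rmin_glb; auto. apply cdist_nonneg. Qed.

Lemma hfun_le0 l x : hfun l x <= cdist x 0.
Proof. induction l; simpl. lra. eapply Rle_trans. apply Rmin_r. auto. Qed.

Lemma hfun_le_half l x : hfun l x <= 1/2.
Proof. eapply Rle_trans. apply hfun_le0. apply phi_le_half. Qed.

Lemma hfun_le_in l x a : In a l -> hfun l x <= cdist x a.
Proof.
  induction l; simpl. tauto. intros [->|H]. apply Rmin_l.
  eapply Rle_trans. apply Rmin_r. auto.
Qed.

Lemma hfun_lip l x y : Rabs (hfun l x - hfun l y) <= Rabs (x - y).
Proof. induction l; simpl. apply cdist_lip1. apply Rmin_lip; auto. apply cdist_lip1. Qed.

Lemma hfun_shift l x k : hfun l (x + IZR k) = hfun l x.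
Proof. induction l; simpl. apply cdist_shift. rewrite IHl, cdist_shift. auto. Qed.

Lemma hfun_zero l x : hfun l x = 0 -> eqmod1 x 0 \/ exists a, In a l /\ eqmod1 x a.
Proof.
  induction l; simpl; intro H.
  - left. apply cdist_zero. auto.
  - unfold Rmin in H. destruct (Rle_dec (cdist x a) (hfun l x)).
    + right. exists a. split; auto. apply cdist_zero. auto.
    + destruct (IHl H) as [H'|[b [Hb Hb']]]; auto. right. exists b. auto.
Qed.

Lemma hfun_vanish l x : (eqmod1 x 0 \/ exists a, In a l /\ eqmod1 x a) -> hfun l x = 0.
Proof.
  intros [H|[a [Ha H]]]; apply Rle_antisym; try apply hfun_nonneg.
  - rewrite <- (cdist_eqmod _ _ H). apply hfun_le0.
  - rewrite <- (cdist_eqmod _ _ H). apply hfun_le_in. auto.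
Qed.

Fixpoint Fh (h : list (R * R)) (x : R) : R :=
  match h with
  | [] => x
  | (a, c) :: h' => Fh h' x + c * hfun (map fst h') x
  end.

Fixpoint sumc (h : list (R * R)) : R :=
  match h with [] => 0 | (a, c) :: h' => Rabs c + sumc h' end.

Lemma sumc_nonneg h : 0 <= sumc h.
Proof. induction h as [|[a c] h]; simpl. lra. pose proof (Rabs_pos c). lra. Qed.

Lemma Fh_shift h x k : Fh h (x + IZR k) = Fh h x + IZR k.
Proof. induction h as [|[a c] h]; simpl. auto. rewrite IHh, hfun_shift. ring. Qed.

Lemma Fh_eqmod h x y : eqmod1 x y -> eqmod1 (Fh h x) (Fh h y).
Proof.
  intros [k Hk]. replace x with (y + IZR k) by lra. rewrite Fh_shift.
  exists k. ring.
Qed.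

Lemma Fh_lip h x y : Rabs ((Fh h x - x) - (Fh h y - y)) <= sumc h * Rabs (x - y).
Proof.
  induction h as [|[a c] h]; simpl.
  - replace (x - x - (y - y)) with 0 by ring. rewrite Rabs_R0. lra.
  - replace (Fh h x + c * hfun (map fst h) x - x - (Fh h y + c * hfun (map fst h) y - y))
      with ((Fh h x - x - (Fh h y - y)) + c * (hfun (map fst h) x - hfun (map fst h) y)) by ring.
    eapply Rle_trans. apply Rabs_triang. rewrite Rabs_mult.
    pose proof (hfun_lip (map fst h) x y).
    assert (Rabs c * Rabs (hfun (map fst h) x - hfun (map fst h) y) <= Rabs c * Rabs (x - y))
      by (apply Rmult_le_compat_l; auto; apply Rabs_pos).
    lra.
Qed.

Lemma Fh_bound h x : Rabs (Fh h x - x) <= sumc h.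
Proof.
  induction h as [|[a c] h]; simpl.
  - replace (x - x) with 0 by ring. rewrite Rabs_R0. lra.
  - replace (Fh h x + c * hfun (map fst h) x - x) with ((Fh h x - x) + c * hfun (map fst h) x) by ring.
    eapply Rle_trans. apply Rabs_triang. rewrite Rabs_mult.
    rewrite (Rabs_right (hfun _ x)) by (apply Rle_ge, hfun_nonneg).
    pose proof (hfun_le_half (map fst h) x). pose proof (hfun_nonneg (map fst h) x).
    assert (Rabs c * hfun (map fst h) x <= Rabs c * 1) by (apply Rmult_le_compat_l; auto; try apply Rabs_pos; lra).
    lra.
Qed.

Lemma Fh_lip2 h x y : Rabs (Fh h x - Fh h y) <= (1 + sumc h) * Rabs (x - y).
Proof.
  pose proof (Fh_lip h x y).
  replace (Fh h x - Fh h y) with ((Fh h x - x - (Fh h y - y)) + (x - y)) by ring.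
  eapply Rle_trans. apply Rabs_triang. lra.
Qed.

Lemma Fh_surj h : sumc h <= 1 -> forall y, exists x, Fh h x = y.
Proof.
  intro H. apply (surj_near_id (Fh h) (1 + sumc h)).
  pose proof (sumc_nonneg h); lra. apply Fh_lip2.
  intro x. eapply Rle_trans. apply Fh_bound. auto.
Qed.

Lemma Fh_old h x : hfun (map fst h) x = 0 -> forall c a, Fh ((a, c) :: h) x = Fh h x.
Proof. intros H c a. simpl. rewrite H. ring. Qed.


Definition eps (n : nat) : R := / 8 * (/ 2) ^ n.

Lemma eps_pos n : 0 < eps n.
Proof. unfold eps. apply Rmult_lt_0_compat. lra. apply pow_lt. lra. Qed.

Definition dt (b k : nat) : R :=
  INR (fst (Cantor.of_nat k)) / INR b ^ (snd (Cantor.of_nat k)).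

Lemma dt_adic b k : adic_mod1 b (dt b k).
Proof. exists (fst (Cantor.of_nat k)), (snd (Cantor.of_nat k)). apply eqmod1_refl. Qed.

Lemma adic_0 b : adic_mod1 b 0.
Proof. exists 0%nat, 0%nat. exists 0%Z. simpl. field. Qed.

Lemma Fh_zero h : Fh h 0 = 0.
Proof. induction h as [|[a c] h]; simpl. auto. rewrite IHh, hfun_vanish. ring. left; apply eqmod1_refl. Qed.

Definition Good (d e n : nat) (h : list (R * R)) (ac : R * R) : Prop :=
  let a := fst ac in let c := snd ac in
  adic_mod1 d a /\ adic_mod1 e (Fh ((a, c) :: h) a) /\ Rabs c <= eps n /\
  (if Nat.even n then eqmod1 a (dt d (Nat.div2 n))
   else eqmod1 (Fh ((a, c) :: h) a) (dt e (Nat.div2 n))).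

Definition Inv (d e : nat) (h : list (R * R)) : Prop :=
  forall p, In p h -> adic_mod1 d (fst p) /\ adic_mod1 e (Fh h (fst p)).

Lemma Inv_step d e n h a c : Inv d e h -> Good d e n h (a, c) -> Inv d e ((a, c) :: h).
Proof.
  intros HI [H1 [H2 _]] p [<-|Hp]; simpl fst; auto.
  destruct (HI p Hp) as [Hp1 Hp2]. split; auto.
  rewrite Fh_old; auto. apply hfun_vanish. right. exists (fst p). split. apply in_map; auto. apply eqmod1_refl.
Qed.

Lemma hfun_zero_adic d e h x : Inv d e h -> hfun (map fst h) x = 0 -> adic_mod1 e (Fh h x).
Proof.
  intros HI H. destruct (hfun_zero _ _ H) as [H0|[a [Ha Hxa]]].
  - apply (adic_eqmod _ _ (Fh h 0)). apply Fh_eqmod; auto. rewrite Fh_zero. apply adic_0.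
  - apply in_map_iff in Ha. destruct Ha as [p [<- Hp]].
    apply (adic_eqmod _ _ (Fh h (fst p))). apply Fh_eqmod; auto. apply (HI p Hp).
Qed.

Lemma Good_exists d e n h : (2 <= d)%nat -> (2 <= e)%nat -> Inv d e h -> sumc h <= 1 ->
  exists ac, Good d e n h ac.
Proof.
  intros hd he HI Hs. unfold Good. simpl fst; simpl snd.
  pose proof (eps_pos n) as Hep.
  destruct (Nat.even n).
  - set (x := dt d (Nat.div2 n)).
    destruct (Req_dec (hfun (map fst h) x) 0) as [Hz|Hz].
    + exists (x, 0). simpl. rewrite Rmult_0_l, Rplus_0_r, Rabs_R0.
      repeat split; try apply dt_adic; try lra; try apply eqmod1_refl.
      eapply hfun_zero_adic; eauto.
    + set (H := hfun (map fst h) x).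
      assert (HH : 0 < H) by (pose proof (hfun_nonneg (map fst h) x); unfold H in *; lra).
      destruct (adic_dense e he (Fh h x) (eps n * H)) as [y [Hy1 Hy2]].
      { apply Rmult_lt_0_compat; auto. }
      exists (x, (y - Fh h x) / H). simpl. fold H.
      replace (Fh h x + (y - Fh h x) / H * H) with y by (field; lra).
      repeat split; auto; try apply dt_adic; try apply eqmod1_refl.
      unfold Rdiv. rewrite Rabs_mult. rewrite Rabs_inv. rewrite (Rabs_right H) by lra.
      apply Rmult_le_reg_r with H; auto. rewrite Rmult_assoc, Rinv_l, Rmult_1_r by lra. lra.
  - set (y := dt e (Nat.div2 n)).
    destruct (classic (exists a, (a = 0 \/ exists c, In (a, c) h) /\ eqmod1 (Fh h a) y)) as [P|NP].
    + destruct P as [a [Ha Hy]]. exists (a, 0). simpl. rewrite Rmult_0_l, Rplus_0_r, Rabs_R0.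
      assert (adic_mod1 d a).
      { destruct Ha as [->|[c Hc]]. apply adic_0. apply (HI _ Hc). }
      repeat split; auto; try lra. eapply adic_eqmod; eauto. apply dt_adic.
    + destruct (Fh_surj h Hs y) as [x0 Hx0].
      set (H0 := hfun (map fst h) x0).
      assert (HH0 : 0 < H0).
      { destruct (Req_dec H0 0) as [Z|Z].
        - exfalso. apply NP. destruct (hfun_zero _ _ Z) as [Hz|[a [Ha Hxa]]].
          + exists 0. split; auto. rewrite <- Hx0. apply Fh_eqmod. apply eqmod1_sym; auto.
          + apply in_map_iff in Ha. destruct Ha as [[a' c] [Ha' Hp]]. simpl in Ha'. subst a'.
            exists a. split. right. exists c; auto. rewrite <- Hx0. apply Fh_eqmod. apply eqmod1_sym; auto.
        - pose proof (hfun_nonneg (map fst h) x0). unfold H0 in *; lra. }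
      set (delta := Rmin (H0 / 2) (eps n * H0 / 4)).
      assert (Hdel : 0 < delta).
      { unfold delta. apply Rmin_glb_lt. lra. apply Rmult_lt_0_compat. apply Rmult_lt_0_compat; lra. lra. }
      destruct (adic_dense d hd x0 delta Hdel) as [x [Hx1 Hx2]].
      set (H := hfun (map fst h) x).
      assert (HHx : H0 / 2 < H).
      { pose proof (hfun_lip (map fst h) x x0). apply absle_inv in H1. fold H H0 in H1.
        assert (delta <= H0 / 2) by apply Rmin_l. lra. }
      assert (HF : Rabs (y - Fh h x) <= eps n * H).
      { rewrite <- Hx0. pose proof (Fh_lip2 h x0 x).
        rewrite <- Rabs_Ropp, Ropp_minus_distr in Hx2.
        assert ((1 + sumc h) * Rabs (x0 - x) <= 2 * delta).
        { apply Rle_trans with (2 * Rabs (x0 - x)). apply Rmult_le_compat_r. apply Rabs_pos. lra. lra. }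
        assert (delta <= eps n * H0 / 4) by apply Rmin_r.
        assert (eps n * H0 <= 2 * (eps n * H)).
        { replace (2 * (eps n * H)) with (eps n * (2 * H)) by ring. apply Rmult_le_compat_l; lra. }
        lra. }
      exists (x, (y - Fh h x) / H). simpl. fold H.
      replace (Fh h x + (y - Fh h x) / H * H) with y by (field; lra).
      repeat split; auto; try apply dt_adic; try apply eqmod1_refl.
      unfold Rdiv. rewrite Rabs_mult. rewrite Rabs_inv. rewrite (Rabs_right H) by lra.
      apply Rmult_le_reg_r with H; [lra|]. rewrite Rmult_assoc, Rinv_l, Rmult_1_r by lra. lra.
Qed.


Lemma eps_series : is_series eps (/ 4).
Proof.
  assert (Rabs (/ 2) < 1) by (rewrite Rabs_right; lra).
  pose proof (is_series_scal_l (/ 8) _ _ (is_series_geom (/ 2) H)) as H0.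
  replace (/ 4) with (scal (/ 8) (/ (1 - / 2))).
  - eapply is_series_ext; [|exact H0]. intro n. reflexivity.
  - unfold scal; simpl; unfold mult; simpl. field.
Qed.

Lemma eps_ex : ex_series eps.
Proof. exists (/ 4). apply eps_series. Qed.
Lemma eps_Series : Series eps = / 4.
Proof. apply is_series_unique, eps_series. Qed.

Definition step (d e n : nat) (h : list (R * R)) : R * R :=
  epsilon (inhabits (0, 0)) (Good d e n h).

Fixpoint hist (d e n : nat) : list (R * R) :=
  match n with
  | O => []
  | S m => step d e m (hist d e m) :: hist d e m
  end.

Lemma hist_props d e (hd : (2 <= d)%nat) (he : (2 <= e)%nat) n :
  Inv d e (hist d e n) /\ sumc (hist d e n) <= / 4 - / 4 * (/ 2) ^ n
  /\ Good d e n (hist d e n) (step d e n (hist d e n)).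
Proof.
  assert (G : forall n, Inv d e (hist d e n) -> sumc (hist d e n) <= / 4 - / 4 * (/ 2) ^ n ->
             Good d e n (hist d e n) (step d e n (hist d e n))).
  { intros m H1 H2. unfold step. apply epsilon_spec. apply Good_exists; auto.
    assert (0 < (/2) ^ m) by (apply pow_lt; lra). lra. }
  induction n.
  - assert (Inv d e []) by (intros p []).
    assert (sumc (hist d e 0) <= / 4 - / 4 * (/ 2) ^ 0) by (simpl; lra).
    split; [auto|split; [auto|apply G; auto]].
  - destruct IHn as [HI [Hs HG]].
    assert (HI' : Inv d e (hist d e (S n))).
    { simpl. destruct (step d e n (hist d e n)) as [a c] eqn:E. eapply Inv_step; eauto. }
    assert (Hs' : sumc (hist d e (S n)) <= / 4 - / 4 * (/ 2) ^ S n).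
    { simpl. destruct (step d e n (hist d e n)) as [a c] eqn:E. simpl.
      destruct HG as [_ [_ [Hc _]]]. simpl in Hc. unfold eps in Hc. simpl. lra. }
    split; [auto|split; [auto|apply G; auto]].
Qed.

Definition T (d e i : nat) (x : R) : R :=
  snd (step d e i (hist d e i)) * hfun (map fst (hist d e i)) x.

Lemma Fh_hist d e n x : Fh (hist d e (S n)) x = x + sum_f_R0 (fun i => T d e i x) n.
Proof.
  induction n.
  - unfold T. simpl. destruct (step d e 0 []) as [a c]. simpl. ring.
  - change (Fh (hist d e (S (S n))) x) with (Fh (step d e (S n) (hist d e (S n)) :: hist d e (S n)) x).
    simpl sum_f_R0. rewrite <- Rplus_assoc, <- IHn. unfold T.
    destruct (step d e (S n) (hist d e (S n))) as [a c]. reflexivity.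
Qed.


Lemma T_bound d e (hd : (2 <= d)%nat) (he : (2 <= e)%nat) i x : Rabs (T d e i x) <= eps i.
Proof.
  unfold T. destruct (hist_props d e hd he i) as [_ [_ [_ [_ [Hc _]]]]].
  rewrite Rabs_mult. rewrite (Rabs_right (hfun _ _)) by (apply Rle_ge, hfun_nonneg).
  pose proof (hfun_le_half (map fst (hist d e i)) x). pose proof (hfun_nonneg (map fst (hist d e i)) x).
  pose proof (Rabs_pos (snd (step d e i (hist d e i)))). pose proof (eps_pos i).
  apply Rle_trans with (Rabs (snd (step d e i (hist d e i))) * 1). apply Rmult_le_compat_l; lra. lra.
Qed.

Lemma T_lip d e (hd : (2 <= d)%nat) (he : (2 <= e)%nat) i x y :
  Rabs (T d e i x - T d e i y) <= eps i * Rabs (x - y).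
Proof.
  unfold T. destruct (hist_props d e hd he i) as [_ [_ [_ [_ [Hc _]]]]].
  rewrite <- Rmult_minus_distr_l, Rabs_mult.
  apply Rmult_le_compat; try apply Rabs_pos; auto. apply hfun_lip.
Qed.

Lemma T_shift d e i x k : T d e i (x + IZR k) = T d e i x.
Proof. unfold T. rewrite hfun_shift. auto. Qed.

Lemma step_in d e n i : (n < i)%nat -> In (step d e n (hist d e n)) (hist d e i).
Proof.
  induction i; intro H. lia. simpl. destruct (Nat.eq_dec n i). subst; auto. right. apply IHi. lia.
Qed.

Lemma T_vanish d e n i : (n < i)%nat -> T d e i (fst (step d e n (hist d e n))) = 0.
Proof.
  intro H. unfold T. rewrite hfun_vanish. ring. right. exists (fst (step d e n (hist d e n))).
  split. apply in_map. apply step_in; auto. apply eqmod1_refl.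
Qed.


Definition Ssum (d e : nat) (x : R) : R := Series (fun i => T d e i x).
Definition ff (d e : nat) (x : R) : R := x + Ssum d e x.


Lemma T_ex d e (hd : (2 <= d)%nat) (he : (2 <= e)%nat) x : ex_series (fun i => T d e i x).
Proof. apply (@ex_series_le R_AbsRing R_CompleteNormedModule _ eps). intro n. change (norm (T d e n x)) with (Rabs (T d e n x)).
  apply T_bound; auto. apply eps_ex. Qed.

Lemma eps_scal_ex c : ex_series (fun n => c * eps n).
Proof. exists (c * / 4). pose proof (is_series_scal_l c _ _ eps_series). exact H. Qed.

Lemma series0 : Series (fun _ : nat => 0) = 0.
Proof. rewrite (Series_ext _ (fun n => 0 * 0)) by (intro; ring). rewrite Series_scal_l. ring. Qed.

Lemma S_lip d e (hd : (2 <= d)%nat) (he : (2 <= e)%nat) x y :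
  Rabs (Ssum d e x - Ssum d e y) <= / 4 * Rabs (x - y).
Proof.
  unfold Ssum. rewrite <- Series_minus by (apply T_ex; auto).
  assert (B : forall n, Rabs (T d e n x - T d e n y) <= Rabs (x - y) * eps n).
  { intro n. rewrite Rmult_comm. apply T_lip; auto. }
  eapply Rle_trans. apply Series_Rabs.
  { apply (@ex_series_le R_AbsRing R_CompleteNormedModule _ (fun n => Rabs (x - y) * eps n)). intro n.
    change (norm (Rabs (T d e n x - T d e n y))) with (Rabs (Rabs (T d e n x - T d e n y))).
    rewrite Rabs_Rabsolu. auto. apply eps_scal_ex. }
  eapply Rle_trans. apply (Series_le _ (fun n => Rabs (x - y) * eps n)).
  { intro n. split. apply Rabs_pos. auto. } apply eps_scal_ex.
  rewrite Series_scal_l, eps_Series. lra.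
Qed.

Lemma S_bound d e (hd : (2 <= d)%nat) (he : (2 <= e)%nat) x : Rabs (Ssum d e x) <= / 4.
Proof.
  unfold Ssum. eapply Rle_trans. apply Series_Rabs.
  { apply (@ex_series_le R_AbsRing R_CompleteNormedModule _ eps). intro n.
    change (norm (Rabs (T d e n x))) with (Rabs (Rabs (T d e n x))).
    rewrite Rabs_Rabsolu. apply T_bound; auto. apply eps_ex. }
  rewrite <- eps_Series. apply Series_le. intro n. split. apply Rabs_pos. apply T_bound; auto.
  apply eps_ex.
Qed.

Lemma S_shift d e x k : Ssum d e (x + IZR k) = Ssum d e x.
Proof. unfold Ssum. apply Series_ext. intro. apply T_shift. Qed.

Lemma ff_shift d e x k : ff d e (x + IZR k) = ff d e x + IZR k.
Proof. unfold ff. rewrite S_shift. ring. Qed.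

Lemma ff_lip d e (hd : (2 <= d)%nat) (he : (2 <= e)%nat) x y :
  Rabs (ff d e x - ff d e y) <= 5 / 4 * Rabs (x - y).
Proof.
  unfold ff. replace (x + Ssum d e x - (y + Ssum d e y)) with ((x - y) + (Ssum d e x - Ssum d e y)) by ring.
  eapply Rle_trans. apply Rabs_triang. pose proof (S_lip d e hd he x y). lra.
Qed.

Lemma ff_lower d e (hd : (2 <= d)%nat) (he : (2 <= e)%nat) x y :
  3 / 4 * Rabs (x - y) <= Rabs (ff d e x - ff d e y).
Proof.
  unfold ff. pose proof (S_lip d e hd he x y).
  pose proof (Rabs_triang_inv (x - y) (-(Ssum d e x - Ssum d e y))). rewrite Rabs_Ropp in H0.
  replace (x - y - - (Ssum d e x - Ssum d e y)) with (x + Ssum d e x - (y + Ssum d e y)) in H0 by ring. lra.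
Qed.

Lemma ff_inj d e (hd : (2 <= d)%nat) (he : (2 <= e)%nat) x y : ff d e x = ff d e y -> x = y.
Proof.
  intro H. pose proof (ff_lower d e hd he x y). rewrite H in H0.
  replace (ff d e y - ff d e y) with 0 in H0 by ring. rewrite Rabs_R0 in H0.
  pose proof (Rabs_pos (x - y)).
  assert (Rabs (x - y) = 0) by lra.
  destruct (Rcase_abs (x - y)); [rewrite Rabs_left in H2|rewrite Rabs_right in H2]; lra.
Qed.

Lemma ff_surj d e (hd : (2 <= d)%nat) (he : (2 <= e)%nat) y : exists x, ff d e x = y.
Proof.
  apply (surj_near_id (ff d e) (5/4)). lra. apply ff_lip; auto.
  intro x. unfold ff. replace (x + Ssum d e x - x) with (Ssum d e x) by ring.
  pose proof (S_bound d e hd he x). lra.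
Qed.

Lemma ff_step d e (hd : (2 <= d)%nat) (he : (2 <= e)%nat) n : ff d e (fst (step d e n (hist d e n))) =
   Fh (hist d e (Datatypes.S n)) (fst (step d e n (hist d e n))).
Proof.
  set (x := fst (step d e n (hist d e n))).
  rewrite Fh_hist. unfold ff, Ssum. f_equal.
  rewrite (Series_incr_n _ (Datatypes.S n)) by (try lia; apply T_ex; auto).
  rewrite (Series_ext _ (fun _ => 0)). rewrite series0. simpl. ring.
  intro k. apply T_vanish. lia.
Qed.

Lemma ff_eqmod d e x y : eqmod1 x y -> eqmod1 (ff d e x) (ff d e y).
Proof. intros [k Hk]. replace x with (y + IZR k) by lra. rewrite ff_shift. exists k. ring. Qed.

Lemma step_good d e (hd : (2 <= d)%nat) (he : (2 <= e)%nat) n :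
  let p := step d e n (hist d e n) in
  adic_mod1 d (fst p) /\ adic_mod1 e (ff d e (fst p)) /\
  (if Nat.even n then eqmod1 (fst p) (dt d (Nat.div2 n))
   else eqmod1 (ff d e (fst p)) (dt e (Nat.div2 n))).
Proof.
  intro p. destruct (hist_props d e hd he n) as [_ [_ HG]].
  unfold p. rewrite ff_step by auto. fold p. fold p in HG.
  change (hist d e (Datatypes.S n)) with (p :: hist d e n).
  destruct HG as [H1 [H2 [_ H4]]]. rewrite <- surjective_pairing in H2, H4. auto.
Qed.

Lemma dt_to b p m : dt b (Cantor.to_nat (p, m)) = INR p / INR b ^ m.
Proof. unfold dt. rewrite Cantor.cancel_of_to. reflexivity. Qed.

Lemma even_double k : Nat.even (2 * k) = true.
Proof. apply Nat.even_spec. exists k. auto. Qed.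
Lemma even_sdouble k : Nat.even (Datatypes.S (2 * k)) = false.
Proof. rewrite Nat.even_succ. unfold Nat.odd. rewrite even_double. auto. Qed.

Lemma circle_map_of F : (forall x k, F (x + IZR k) = F x + IZR k) -> circle_map F.
Proof. intros Hs x y [k Hk]. replace x with (y + IZR k) by lra. rewrite Hs. exists k. ring. Qed.

Lemma circle_cont_of F L : 0 < L -> (forall x k, F (x + IZR k) = F x + IZR k) ->
  (forall x y, Rabs (F x - F y) <= L * Rabs (x - y)) -> circle_continuous F.
Proof.
  intros HL Hs Hl x eps0 He. exists (eps0 / L). split. apply Rdiv_lt_0_compat; auto.
  intros y Hy. eapply Rle_lt_trans. apply (cdist_lip_map F L Hs Hl).
  apply Rmult_lt_reg_l with (/ L). apply Rinv_0_lt_compat; auto.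
  rewrite <- Rmult_assoc, Rinv_l, Rmult_1_l by lra. unfold Rdiv in Hy. lra.
Qed.

Theorem proposition3p4 (d e : nat) (hd : (2 <= d)%nat) (he : (2 <= e)%nat) :
  exists f : R -> R,
    circle_homeo f /\ circle_quasisymmetric f /\
    (forall x, adic_mod1 d x -> adic_mod1 e (f x)) /\
    (forall y, adic_mod1 e y -> exists x, adic_mod1 d x /\ eqmod1 (f x) y).
Proof.
  set (f := ff d e).
  assert (Hs : forall x k, f (x + IZR k) = f x + IZR k) by apply ff_shift.
  assert (Hl : forall x y, Rabs (f x - f y) <= 5 / 4 * Rabs (x - y)) by (apply ff_lip; auto).
  assert (Hlo : forall x y, 3 / 4 * Rabs (x - y) <= Rabs (f x - f y)) by (apply ff_lower; auto).
  assert (Hinj : forall x y, f x = f y -> x = y) by (apply ff_inj; auto).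
  set (g := fun y => proj1_sig (constructive_indefinite_description _ (ff_surj d e hd he y))).
  assert (Hfg : forall y, f (g y) = y) by (intro y; unfold g; destruct constructive_indefinite_description; auto).
  exists f. split; [|split; [|split]].
  - split; [apply circle_map_of; auto|split; [apply (circle_cont_of f (5/4)); auto; lra|]].
    assert (Hgs : forall y k, g (y + IZR k) = g y + IZR k).
    { intros y k. apply Hinj. rewrite Hs, !Hfg. auto. }
    exists g. split; [apply circle_map_of; auto|split].
    + apply (circle_cont_of g (4/3)); auto. lra. intros x y.
      pose proof (Hlo (g x) (g y)). rewrite !Hfg in H. lra.
    + split; intro x. rewrite (Hinj (g (f x)) x). apply eqmod1_refl. apply Hfg.
      rewrite Hfg. apply eqmod1_refl.
  - exists (fun t => 2 * t). split.
    + split; [ring|split; [intros; lra|split]].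
      * intros t _. apply (lip_continuity _ 2). lra. intros x y.
        replace (2 * x - 2 * y) with (2 * (x - y)) by ring. rewrite Rabs_mult, Rabs_right by lra. lra.
      * intro M. exists (Rabs M + 1). split. pose proof (Rabs_pos M); lra.
        pose proof (Rle_abs M). pose proof (Rabs_pos M). cbv beta. lra.
    + intros x y z Hz.
      pose proof (cdist_lip_map f (5/4) Hs Hl x y).
      pose proof (cdist_lower_map f (3/4) ltac:(lra) Hs Hlo x z).
      pose proof (cdist_nonneg x y).
      replace (2 * (cdist x y / cdist x z) * cdist (f x) (f z))
        with (2 * cdist x y * (cdist (f x) (f z) / cdist x z)) by (field; lra).
      assert (3 / 4 <= cdist (f x) (f z) / cdist x z).
      { apply Rmult_le_reg_r with (cdist x z); auto. replace (cdist (f x) (f z) / cdist x z * cdist x z) with (cdist (f x) (f z)) by (field; lra). lra. }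

      apply Rle_trans with (2 * cdist x y * (3 / 4)). lra.
      apply Rmult_le_compat_l; lra.
  - intros x [p [m Hx]].
    pose proof (step_good d e hd he (2 * Cantor.to_nat (p, m))) as [H1 [H2 H3]].
    rewrite even_double, Nat.div2_double, dt_to in H3.
    apply (adic_eqmod _ _ (ff d e (fst (step d e (2 * Cantor.to_nat (p, m)) (hist d e (2 * Cantor.to_nat (p, m))))))); auto.
    apply ff_eqmod. eapply eqmod1_trans. apply Hx. apply eqmod1_sym; auto.
  - intros y [q [m Hy]].
    pose proof (step_good d e hd he (Datatypes.S (2 * Cantor.to_nat (q, m)))) as [H1 [H2 H3]].
    rewrite even_sdouble, Nat.div2_succ_double, dt_to in H3.
    eexists. split. apply H1. eapply eqmod1_trans. apply H3. apply eqmod1_sym; auto.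
Qed.
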